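(* Let $k$ be a positive integer and $G$ a graph. (1) If $G$ contains a Hamiltonian cycle $C$ such that $G-E(C)\in\mathcal{SZ}_k$, then $G\in\mathcal{SC}_k$. (2) If for any two distinct vertices $x,y$ of $G$ there is a Hamiltonian $(x,y)$-path $P_{xy}$ such that $G-E(P_{xy})\in\mathcal{SZ}_k$, then $G\in\mathcal{W}_k$.
   Context: Graphs may have parallel edges but no loops. A $\mathbb{Z}_k$-boundary of $G$ is a map $\beta:V(G)\to\mathbb{Z}_k$ with $\sum_v\beta(v)\equiv0\pmod k$; a $(\mathbb{Z}_k,\beta)$-orientation is an orientation $D$ with $d^+_D(v)-d^-_D(v)\equiv\beta(v)\pmod k$ for all $v$; $G$ is strongly $\mathbb{Z}_k$-connected (written $G\in\mathcal{SZ}_k$) if it has a $(\mathbb{Z}_k,\beta)$-orientation for every $\mathbb{Z}_k$-boundary $\beta$. A $\mathbb{Z}_{2k}$-pc-boundary of $G$ is a map $\beta:V(G)\to\{0,\pm1,\dots,\pm k\}$ with $\beta(v)\equiv d_G(v)\pmod2$ for all $v$ and $\sum_v\beta(v)\equiv0\pmod{2k}$; a $(2k,\beta)$-orientation is an orientation $D$ with $d^+_D(v)-d^-_D(v)\equiv\beta(v)\pmod{2k}$ for all $v$. An orientation is strongly connected if every nonempty proper vertex subset $S$ has $d^+_D(S)>0$ and $d^-_D(S)>0$. $\mathcal{SC}_k$ is the family of graphs having a strongly connected $(2k,\beta)$-orientation for every $\mathbb{Z}_{2k}$-pc-boundary $\beta$. A graph $G$ is a nice supergraph of $H$ if $H\subseteq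 G$ and there are distinct $x,y\in V(H)$ joined by a path in $G-E(H)$. For connected $H\subseteq G$, $G/H$ is obtained by identifying $V(H)$ into a new vertex $w$ and deleting loops; given a $\mathbb{Z}_{2k}$-pc-boundary $\beta$ of $G$, $\beta'$ on $G/H$ is defined by $\beta'(w)\equiv\sum_{v\in V(H)}\beta(v)\pmod{2k}$ (taken in $\{0,\pm1,\dots,\pm k\}$) and $\beta'(v)=\beta(v)$ otherwise. $H\in\mathcal{W}_k$ (weakly contractible) if for every nice supergraph $G$ of $H$ and every $\mathbb{Z}_{2k}$-pc-boundary $\beta$ of $G$, every strongly connected $(2k,\beta')$-orientation of $G/H$ can be extended (by orienting the edges of $H$) to a strongly connected $(2k,\beta)$-orientation of $G$. *)

(* Defs.v *)
From mathcomp Require Import all_boot all_order all_algebra.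
Set Implicit Arguments. Unset Strict Implicit. Unset Printing Implicit Defensive.
Import GRing.Theory Num.Theory.
Local Open Scope ring_scope.

(* Multigraphs (parallel edges allowed, no loops).  A graph is given by a
   finite vertex type V, a finite edge type E, endpoint maps src tgt : E -> V
   and the set D : {set E} of edges that are actually present.
   An orientation is o : E -> bool : if o e then e is directed src e -> tgt e,
   otherwise tgt e -> src e (only its values on D matter). *)

Section Graphs.
Variables (V E : finType) (src tgt : E -> V).

Definition joins (e : E) (a b : V) : bool :=
  ((src e == a) && (tgt e == b)) || ((src e == b) && (tgt e == a)).

Definition loopless (D : {set E}) : Prop := forall e, e \in D -> src e != tgt e.

Definition tail (o : E -> bool) (e : E) : V := if o e then src e else tgt e.
Definition head (o : E -> bool) (e : E) : V := if o e then tgt e else src e.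

Definition netout (D : {set E}) (o : E -> bool) (v : V) : int :=
  (#|[set e in D | tail o e == v]|)%:Z - (#|[set e in D | head o e == v]|)%:Z.

(* degree (no loops, so each incident edge counts once) *)
Definition deg (D : {set E}) (v : V) : nat :=
  #|[set e in D | (src e == v) || (tgt e == v)]|.

Definition strongly_connected (D : {set E}) (o : E -> bool) : Prop :=
  forall S : {set V}, S != set0 -> S != setT ->
    (exists2 e, e \in D & (tail o e \in S) && (head o e \notin S)) /\
    (exists2 e, e \in D & (head o e \in S) && (tail o e \notin S)).

(* Z_k-boundaries are represented by integer lifts beta : V -> int;
   all conditions on them are congruences mod k. *)
Definition SZ (k : nat) (D : {set E}) : Prop :=
  forall beta : V -> int, (\sum_(v : V) beta v == 0 %[mod k%:Z])%Z ->
    exists o : E -> bool, forall v, (netout D o v == beta v %[mod k%:Z])%Z.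

Definition pc_boundary (k : nat) (D : {set E}) (beta : V -> int) : Prop :=
  [/\ forall v, `|beta v| <= k%:Z,
      forall v, (beta v == (deg D v)%:Z %[mod 2])%Z
    & (\sum_(v : V) beta v == 0 %[mod (2 * k)%N%:Z])%Z].

Definition SC (k : nat) (D : {set E}) : Prop :=
  forall beta : V -> int, pc_boundary k D beta ->
    exists o : E -> bool, strongly_connected D o /\
      forall v, (netout D o v == beta v %[mod (2 * k)%N%:Z])%Z.

Definition adj (D : {set E}) : rel V :=
  fun a b => [exists e in D, joins e a b].

Definition ham_cycle (D C : {set E}) : Prop :=
  exists (vs : nat -> V) (es : nat -> E),
    let n := #|V| in
    (2 <= n)%N /\
    [/\ {in [pred i | (i < n)%N] &, injective vs},
        (forall v, exists2 i, (i < n)%N & vs i = v),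
        {in [pred i | (i < n)%N] &, injective es} /\
        (forall i, (i < n)%N -> es i \in D /\ joins (es i) (vs i) (vs (i.+1 %% n)%N))
      & C = [set e | [exists i : 'I_n, es i == e]]].

Definition ham_path (D : {set E}) (x y : V) (P : {set E}) : Prop :=
  exists (vs : nat -> V) (es : nat -> E),
    let n := #|V| in
    [/\ {in [pred i | (i < n)%N] &, injective vs},
        (forall v, exists2 i, (i < n)%N & vs i = v),
        vs 0%N = x /\ vs n.-1 = y,
        (forall i, (i.+1 < n)%N -> es i \in D /\ joins (es i) (vs i) (vs i.+1))
      & P = [set e | [exists i : 'I_n.-1, es i == e]]].

End Graphs.

(* Contraction G/H where H is embedded in G = (V', E', src', tgt', D') through
   fV : V -> V' (all vertices of H).  The vertices of G/H are
   option {x : V' | x \notin codom fV}; None is the new vertex w. *)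
Section Contraction.
Variables (V V' E' : finType) (fV : V -> V') (src' tgt' : E' -> V').

Definition cverts := option {x : V' | x \notin codom fV}.
Definition cmap (x : V') : option {x : V' | x \notin codom fV} := insub x.
Definition csrc (e : E') := cmap (src' e).
Definition ctgt (e : E') := cmap (tgt' e).
Definition cedges (D' : {set E'}) : {set E'} :=
  [set e in D' | csrc e != ctgt e].
(* induced boundary beta' (taken as an integer; only its class mod 2k matters) *)
Definition cbeta (beta : V' -> int) (u : option {x : V' | x \notin codom fV}) : int :=
  match u with
  | None => \sum_(v : V) beta (fV v)
  | Some x => beta (val x)
  end.
End Contraction.
Arguments cmap {V V'} fV x.
Arguments csrc {V V' E'} fV src' e.
Arguments ctgt {V V' E'} fV tgt' e.
Arguments cedges {V V' E'} fV src' tgt' D'.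
Arguments cbeta {V V'} fV beta u.

Definition W (k : nat) (V E : finType) (src tgt : E -> V) (D : {set E}) : Prop :=
  forall (V' E' : finType) (src' tgt' : E' -> V') (D' : {set E'})
         (fV : V -> V') (fE : E -> E'),
    loopless src' tgt' D' ->
    (* H is a subgraph of G *)
    injective fV -> {in D &, injective fE} ->
    (forall e, e \in D -> fE e \in D' /\ joins src' tgt' (fE e) (fV (src e)) (fV (tgt e))) ->
    (* G is a nice supergraph of H *)
    (exists x y : V, x != y /\ connect (adj src' tgt' (D' :\: fE @: D)) (fV x) (fV y)) ->
    forall beta : V' -> int, pc_boundary src' tgt' k D' beta ->
    forall o' : E' -> bool,
      strongly_connected (csrc fV src') (ctgt fV tgt') (cedges fV src' tgt' D') o' ->
      (forall u, (netout (csrc fV src') (ctgt fV tgt') (cedges fV src' tgt' D') o' u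
                   == cbeta fV beta u %[mod (2 * k)%N%:Z])%Z) ->
      exists o : E' -> bool,
        [/\ strongly_connected src' tgt' D' o,
            (forall v, (netout src' tgt' D' o v == beta v %[mod (2 * k)%N%:Z])%Z)
          & (forall e, e \in cedges fV src' tgt' D' -> o e = o' e)].

(* Main.v *)
Require Import Defs.
From mathcomp Require Import all_boot all_order all_algebra.
From mathcomp Require Import ring lra zify.
Set Implicit Arguments. Unset Strict Implicit. Unset Printing Implicit Defensive.
Import GRing.Theory Num.Theory.
Local Open Scope ring_scope.


Section Gen.
Variables (V E : finType) (src tgt : E -> V).

Lemma card_int (D : {set E}) (p : pred E) :
  (#|[set e in D | p e]|)%:Z = \sum_(e in D) ((p e : nat)%:Z).
Proof.
have -> : #|[set e in D | p e]| = (\sum_(e in D) (p e : nat))%N.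
  rewrite -sum1_card big_mkcond /= [RHS]big_mkcond /=.
  apply: eq_bigr => e _; rewrite inE; by case: (e \in D); case: (p e).
by rewrite -natz natr_sum; apply: eq_bigr => e _; rewrite natz.
Qed.

Lemma netoutE D o v : netout src tgt D o v =
  \sum_(e in D) (((tail src tgt o e == v) : nat)%:Z - ((Defs.head src tgt o e == v) : nat)%:Z).
Proof. by rewrite /netout !card_int -sumrB. Qed.

Lemma netout_sum D o : \sum_v netout src tgt D o v = 0.
Proof.
under eq_bigr do rewrite netoutE.
rewrite exchange_big /=; apply: big1 => e _.
rewrite sumrB.
have H : forall w : V, \sum_(v : V) ((w == v) : nat)%:Z = 1.
  move=> w; rewrite (bigD1 w) //= eqxx big1 ?addr0 // => v /negbTE.
  by rewrite eq_sym => ->.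
by rewrite !H subrr.
Qed.

Lemma netout_split D A o v : netout src tgt D o v =
  netout src tgt (D :&: A) o v + netout src tgt (D :\: A) o v.
Proof. by rewrite !netoutE (big_setID A). Qed.

Lemma eq_netout (D : {set E}) (o1 o2 : E -> bool) v : {in D, o1 =1 o2} ->
  netout src tgt D o1 v = netout src tgt D o2 v.
Proof.
move=> h; rewrite !netoutE; apply: eq_bigr => e eD.
by rewrite /tail /Defs.head h.
Qed.

Lemma netout_parity D o v : loopless src tgt D ->
  (netout src tgt D o v == (deg src tgt D v)%:Z %[mod 2])%Z.
Proof.
move=> ll.
have -> : deg src tgt D v = (#|[set e in D | tail src tgt o e == v]| +
   #|[set e in D | Defs.head src tgt o e == v]|)%N.
  rewrite /deg.
  have I : [set e in D | tail src tgt o e == v] :&: [set e in D | Defs.head src tgt o e == v] = set0.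
    apply/setP => e; rewrite !inE.
    case eD: (e \in D) => //=.
    have := ll e eD; rewrite /tail /Defs.head; case: (o e) => /=.
      by apply: contraNF => /andP [/eqP -> /eqP ->].
    by apply: contraNF => /andP [/eqP -> /eqP ->].
  rewrite -[X in _ = X]subn0 -(cards0 E) -I -cardsU; apply: eq_card => e; rewrite !inE /tail /Defs.head.
  case: (e \in D); case: (o e) => //=; by rewrite orbC.

rewrite /netout eqz_mod_dvd PoszD.
set a := Posz _; set b := Posz _.
have -> : a - b - (a + b) = (-b) * 2%:Z by ring.
by rewrite dvdz_mull.
Qed.

Definition darc (D : {set E}) (o : E -> bool) : rel V :=
  fun a b => [exists e in D, (tail src tgt o e == a) && (Defs.head src tgt o e == b)].

Lemma cross D o (S : {set V}) x y : connect (darc D o) x y -> x \in S -> y \notin S ->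
  exists2 e, e \in D & (tail src tgt o e \in S) && (Defs.head src tgt o e \notin S).
Proof.
move=> /connectP [p]; elim: p x => [|z p IH] x /= => [_ -> ->|/andP [axz pz] ey xS yS] //.
case zS: (z \in S); first exact: IH pz ey zS yS.
case/existsP: axz => e /andP [eD /andP [/eqP t /eqP h]].
by exists e => //; rewrite t h xS zS.
Qed.

Lemma sc_of_connect D o : (forall u v, connect (darc D o) u v) -> strongly_connected src tgt D o.
Proof.
move=> c S S0 ST.
case/set0Pn: S0 => x xS.
have [y yS] : exists y, y \notin S.
  apply/existsP; move: ST; apply: contraR; rewrite negb_exists => /forallP h.
  by apply/eqP/setP => z; move: (h z); rewrite negbK inE => ->.
split; first exact: cross (c x y) xS yS.
have yS' : y \in ~: S by rewrite inE.
have xS' : x \notin ~: S by rewrite inE negbK.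
have [e eD /andP [h1 h2]] := cross (c y x) yS' xS'.
by exists e => //; move: h1 h2; rewrite !inE negbK => -> ->.
Qed.

Lemma connect_of_sc D o : strongly_connected src tgt D o -> forall u v, connect (darc D o) u v.
Proof.
move=> sc u v; apply/negPn/negP => nuv.
pose S := [set w | connect (darc D o) u w].
have S0 : S != set0 by apply/set0Pn; exists u; rewrite inE connect0.
have ST : S != setT by apply/eqP => /setP /(_ v); rewrite !inE (negbTE nuv).
have [[e eD /andP [h1 h2]] _] := sc S S0 ST.
move: h1 h2; rewrite !inE => h1 /negP; apply; apply: connect_trans h1 _.
by apply: connect1; apply/existsP; exists e; rewrite eD !eqxx.
Qed.

Lemma arc_sub (D1 D2 : {set E}) (o1 o2 : E -> bool) : D1 \subset D2 -> {in D1, o1 =1 o2} ->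
  forall a b, darc D1 o1 a b -> darc D2 o2 a b.
Proof.
move=> sD eo a b /existsP [e /andP [eD h]]; apply/existsP; exists e.
by rewrite (subsetP sD) //= /tail /Defs.head -eo.
Qed.

Lemma connect_sub_arc (D1 D2 : {set E}) (o1 o2 : E -> bool) : D1 \subset D2 -> {in D1, o1 =1 o2} ->
  forall a b, connect (darc D1 o1) a b -> connect (darc D2 o2) a b.
Proof.
move=> sD eo a b; apply: connect_sub => x y h; apply: connect1; exact: arc_sub h.
Qed.


Lemma combine_mod (k : nat) (a b : int) : odd k ->
  (a == b %[mod k%:Z])%Z -> (a == b %[mod 2])%Z -> (a == b %[mod (2 * k)%N%:Z])%Z.
Proof.
move=> ok; rewrite !eqz_mod_dvd PoszM Gauss_dvdz => [-> ->//|].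
have := coprime2n k; rewrite ok /coprime => /eqP g.
by rewrite /coprimez /gcdz /= g.
Qed.

Lemma not_SZ_even (k : nat) (D : {set E}) (u w : V) : ~~ odd k -> loopless src tgt D ->
  u != w -> ~ SZ src tgt k D.
Proof.
move=> ek ll uw sz.
pose c : int := (deg src tgt D u)%:Z + 1.
pose beta := fun v : V => if v == u then c else if v == w then - c else 0.
have [|o ho] := sz beta.
  have wu : w != u by rewrite eq_sym.
  rewrite (bigD1 u) //= (bigD1 w) /=; last by rewrite wu.
  rewrite big1 => [|v /andP [vu vw]].
    by rewrite /beta eqxx (negbTE wu) eqxx addr0 subrr.
  by rewrite /beta (negbTE vu) (negbTE vw).
have h1 := ho u; rewrite /beta eqxx in h1.
have h2 := netout_parity o u ll.
move: h1 h2; rewrite !eqz_mod_dvd => h1 h2.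
have : (2 %| k%:Z)%Z by have : (2 %| k)%N by rewrite dvdn2.
move=> /dvdz_trans /(_ h1) h3.
have := rpredB h3 h2.
rewrite /c (_ : _ - _ - _ = -1) ?rpredN; first by rewrite dvdz1.
ring.
Qed.

End Gen.

Lemma connect_fwd (T : finType) (e : rel T) (P : T -> Prop) x y :
  connect e x y -> P x -> (forall a b, e a b -> P a -> P b) -> P y.
Proof.
move=> /connectP [p]; elim: p x => [|z p IH] x /= => [_ -> //|/andP [exz pz] ey Px cl].
exact: IH pz ey (cl _ _ exz Px) cl.
Qed.

Lemma connect_bwd (T : finType) (e : rel T) (P : T -> Prop) x y :
  connect e x y -> P y -> (forall a b, e a b -> P b -> P a) -> P x.
Proof.
move=> /connectP [p]; elim: p x => [|z p IH] x /= => [_ -> //|/andP [exz pz] ey Py cl].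
exact: cl _ _ exz (IH _ pz ey Py cl).
Qed.

Section Contr.
Variables (V V' E' : finType) (fV : V -> V') (src' tgt' : E' -> V').

Lemma tail_c o e : tail (csrc fV src') (ctgt fV tgt') o e = cmap fV (tail src' tgt' o e).
Proof. by rewrite /tail /csrc /ctgt; case: (o e). Qed.

Lemma head_c o e : Defs.head (csrc fV src') (ctgt fV tgt') o e = cmap fV (Defs.head src' tgt' o e).
Proof. by rewrite /Defs.head /csrc /ctgt; case: (o e). Qed.

Lemma cmapN w : (cmap fV w == None) = (w \in codom fV).
Proof. rewrite /cmap; case: insubP => [u h _|h] /=; first by rewrite (negbTE h).
by rewrite (negbNE h). Qed.

Lemma cmapS w x : cmap fV w = Some x -> val x = w.
Proof. by rewrite /cmap; case: insubP => // u _ <- [<-]. Qed.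

Lemma cmap_val (x : {x : V' | x \notin codom fV}) : cmap fV (val x) = Some x.
Proof. by rewrite /cmap valK. Qed.

Lemma cmap_eqS w x : (cmap fV w == Some x) = (w == val x).
Proof.
case: eqP => [h|h]; first by rewrite -(cmapS h) eqxx.
by apply/esym/negP => /eqP wx; apply: h; rewrite wx cmap_val.
Qed.

End Contr.

Lemma tail_eqo (V E : finType) (src tgt : E -> V) o1 o2 e : o1 e = o2 e ->
  tail src tgt o1 e = tail src tgt o2 e.
Proof. by rewrite /tail => ->. Qed.

Lemma head_eqo (V E : finType) (src tgt : E -> V) o1 o2 e : o1 e = o2 e ->
  Defs.head src tgt o1 e = Defs.head src tgt o2 e.
Proof. by rewrite /Defs.head => ->. Qed.



Lemma modS_neq (i n : nat) : (i < n)%N -> (2 <= n)%N -> (i.+1 %% n)%N != i.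
Proof.
move=> iN n2; case: (ltnP i.+1 n) => h.
  by rewrite modn_small // gtn_eqF.
have ni : n = i.+1 by apply/eqP; rewrite eqn_leq h iN.
by rewrite ni modnn eq_sym -lt0n; rewrite ni in n2.
Qed.

Lemma mod_sum_k (k : nat) (x : int) : (x == 0 %[mod (2 * k)%N%:Z])%Z -> (x == 0 %[mod k%:Z])%Z.
Proof.
rewrite !eqz_mod_dvd => h; apply: dvdz_trans h.
by rewrite PoszM dvdz_mull.
Qed.

Lemma part1 (k : nat) (V E : finType) (src tgt : E -> V) :
  (0 < k)%N -> loopless src tgt [set: E] ->
  (exists C : {set E}, ham_cycle src tgt [set: E] C /\ SZ src tgt k (~: C)) ->
     SC src tgt k [set: E].
Proof.
move=> k0 ll [C [[vs [es [n2 [vinj vsurj [einj eok] defC]]]] sz]].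
set n := #|V| in n2 vinj vsurj einj eok defC.
have vsneq : forall i, (i < n)%N -> vs i != vs (i.+1 %% n)%N.
  move=> i iN; apply/eqP => /vinj h.
  have := modS_neq iN n2; rewrite -h ?eqxx //; rewrite ?inE //.
  by rewrite ltn_pmod // (leq_trans _ n2).
case: (boolP (odd k)) => ok; last first.
  have h01 : vs 0%N != vs 1%N.
    apply/eqP => h; have := vinj 0%N 1%N; rewrite !inE => /(_ (ltnW n2) n2 h) //.
  exfalso; apply: (not_SZ_even ok _ h01 sz).
  by move=> e _; apply: ll.
pose oC e := [exists i : 'I_n, (es i == e) && (src e == vs i)].
have key : forall i, (i < n)%N -> tail src tgt oC (es i) = vs i /\
     Defs.head src tgt oC (es i) = vs (i.+1 %% n)%N.
  move=> i iN; rewrite /tail /Defs.head; have [_ /orP [/andP [/eqP s /eqP t]|/andP [/eqP s /eqP t]]] := eok i iN.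
    have -> : oC (es i) by apply/existsP; exists (Ordinal iN); rewrite eqxx s eqxx.
    by [].
  have -> : oC (es i) = false.
    rewrite /oC; case: existsP => // -[j /andP [/eqP ej /eqP sj]]; exfalso.
    have ji : (j : nat) = i by apply: einj; rewrite ?inE.
    by move: sj; rewrite s ji => /eqP; rewrite eq_sym (negbTE (vsneq i iN)).
  by [].
have esC : forall i, (i < n)%N -> es i \in C.
  by move=> i iN; rewrite defC inE; apply/existsP; exists (Ordinal iN).
move=> beta [bk bpar bsum].
pose gam v := beta v - netout src tgt C oC v.
have [|oH hoH] := sz gam.
  rewrite /gam sumrB netout_sum subr0; exact: mod_sum_k.
pose o e := if e \in C then oC e else oH e.
exists o; split.
  apply: sc_of_connect.
  have step : forall i, (i < n)%N -> darc src tgt setT o (vs i) (vs (i.+1 %% n)%N).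
    move=> i iN; apply/existsP; exists (es i); rewrite inE /=.
    have [t h] := key i iN.
    have eo : o (es i) = oC (es i) by rewrite /o esC.
    have tE : tail src tgt o (es i) = tail src tgt oC (es i) by rewrite /tail eo.
    have hE : Defs.head src tgt o (es i) = Defs.head src tgt oC (es i) by rewrite /Defs.head eo.
    by rewrite tE hE t h !eqxx.
  have n0 : (0 < n)%N by apply: leq_trans n2.
  have walk : forall i m, (i < n)%N -> connect (darc src tgt setT o) (vs i) (vs ((i + m) %% n)%N).
    move=> i m iN; elim: m => [|m IH]; first by rewrite addn0 modn_small.
    apply: connect_trans IH _; apply: connect1.
    have := step _ (ltn_pmod (i + m) n0).
    by rewrite -addn1 modnDml addn1 addnS.
  move=> u v; have [i iN <-] := vsurj u; have [j jN <-] := vsurj v.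
  have := walk i (n - i + j)%N iN.
  by rewrite addnA subnKC ?(ltnW iN) // modnDl modn_small.
move=> v.
have -> : netout src tgt setT o v = netout src tgt C oC v + netout src tgt (~: C) oH v.
  rewrite (netout_split _ _ _ C) setTI setTD; congr (_ + _); apply: eq_netout => e.
    by rewrite /o => ->.
  by rewrite /o inE => /negbTE ->.
apply: combine_mod => //.
  have := hoH v; rewrite /gam !eqz_mod_dvd.
  set a := netout src tgt C oC v; set b := netout src tgt (~: C) oH v.
  by have -> : a + b - beta v = b - (beta v - a) by ring.
have h1 : (netout src tgt [set: E] o v == (deg src tgt [set: E] v)%:Z %[mod 2])%Z.
  exact: netout_parity.
have -> : netout src tgt C oC v + netout src tgt (~: C) oH v = netout src tgt [set: E] o v.
  rewrite [RHS](netout_split _ _ _ C) setTI setTD; congr (_ + _); apply: eq_netout => e.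
    by rewrite /o => ->.
  by rewrite /o inE => /negbTE ->.
by rewrite (eqP h1) (eqP (bpar v)).
Qed.


Lemma part2 (k : nat) (V E : finType) (src tgt : E -> V) :
  (0 < k)%N -> loopless src tgt [set: E] ->
  (forall x y : V, x != y ->
      exists P : {set E}, ham_path src tgt [set: E] x y P /\ SZ src tgt k (~: P)) ->
     W k src tgt [set: E].
Proof.
move=> k0 ll hyp V' E' src' tgt' D' fV fE ll' fVinj fEinj fEok [x0 [y0 [xy0 nice]]].
move=> beta bpc o' sc' hbeta.
case: (boolP (odd k)) => ok; last first.
  have [P [_ sz]] := hyp x0 y0 xy0.
  by exfalso; apply: (not_SZ_even ok _ xy0 sz) => e _; apply: ll.
set HS := fE @: [set: E].
set rest := D' :\: HS.
set CE := cedges fV src' tgt' D'.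
set r0 := darc src' tgt' rest o'.
set rc := darc (csrc fV src') (ctgt fV tgt') CE o'.
have HSD : forall e, e \in HS -> e \in D'.
  by move=> e /imsetP [e0 _ ->]; have [] := fEok e0 (in_setT _).
have HSends : forall e, e \in HS -> (src' e \in codom fV) && (tgt' e \in codom fV).
  move=> e /imsetP [e0 _ ->]; have [_ /orP [] /andP [/eqP -> /eqP ->]] := fEok e0 (in_setT _);
  by rewrite !codom_f.
have CEnH : forall e, e \in CE -> e \notin HS.
  move=> e; rewrite inE => /andP [_]; apply: contra => /HSends /andP [s t].
  by rewrite /csrc /ctgt; apply/eqP; rewrite (eqP (_ : cmap fV (src' e) == None)) ?cmapN //
    (eqP (_ : cmap fV (tgt' e) == None)) ?cmapN.
have CErest : forall e, e \in CE -> e \in rest.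
  move=> e eC; rewrite inE CEnH //=; move: eC; rewrite inE => /andP [].
  by [].
have cc : forall X Y, connect rc X Y by apply: connect_of_sc.
have r0e : forall e, e \in CE -> r0 (tail src' tgt' o' e) (Defs.head src' tgt' o' e).
  by move=> e eC; apply/existsP; exists e; rewrite CErest // !eqxx.
have codomN : forall w, cmap fV w = None -> exists b, w = fV b.
  move=> w /eqP; rewrite cmapN => /codomP [b ->]; by exists b.
have Out : forall v, exists b, connect r0 v (fV b).
  move=> v; case: (boolP (v \in codom fV)) => [/codomP [b ->]|nv]; first by exists b; rewrite connect0.
  pose x : {x : V' | x \notin codom fV} := exist _ v nv.
  pose P := fun Y => (exists b, connect r0 v (fV b)) \/
     (exists w, cmap fV w = Y /\ connect r0 v w).
  have P0 : P (Some x) by right; exists v; split; [exact: (cmap_val x)| exact: connect0].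
  have cl : forall X Y, rc X Y -> P X -> P Y.
    move=> X Y /existsP [e /andP [eC /andP [/eqP t /eqP h]]] [[b hb]|[w [cw hw]]];
      first by left; exists b.
    rewrite tail_c in t; rewrite head_c in h.
    case: X t cw => [y|] t cw.
      have := cmapS t; rewrite (cmapS cw) => wt.
      right; exists (Defs.head src' tgt' o' e); split => //.
      apply: connect_trans hw (connect1 _).
      by subst w; exact: r0e.
    by have [b wb] := codomN _ cw; left; exists b; rewrite -wb.
  have [[b hb]|[w [cw hw]]] := connect_fwd (cc (Some x) None) P0 cl; first by exists b.
  by have [b wb] := codomN _ cw; exists b; rewrite -wb.
have In : forall v, exists a, connect r0 (fV a) v.
  move=> v; case: (boolP (v \in codom fV)) => [/codomP [b ->]|nv]; first by exists b; rewrite connect0.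
  pose x : {x : V' | x \notin codom fV} := exist _ v nv.
  pose P := fun Y => (exists a, connect r0 (fV a) v) \/
     (exists w, cmap fV w = Y /\ connect r0 w v).
  have P0 : P (Some x) by right; exists v; split; [exact: (cmap_val x)| exact: connect0].
  have cl : forall X Y, rc X Y -> P Y -> P X.
    move=> X Y /existsP [e /andP [eC /andP [/eqP t /eqP h]]] [[b hb]|[w [cw hw]]];
      first by left; exists b.
    rewrite tail_c in t; rewrite head_c in h.
    case: Y h cw => [y|] h cw.
      have := cmapS h; rewrite (cmapS cw) => wt.
      right; exists (tail src' tgt' o' e); split => //.
      apply: connect_trans (connect1 _) hw.
      by subst w; exact: r0e.
    by have [b wb] := codomN _ cw; left; exists b; rewrite -wb.
  have [[b hb]|[w [cw hw]]] := connect_bwd (cc None (Some x)) P0 cl; first by exists b.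
  by have [b wb] := codomN _ cw; exists b; rewrite -wb.
have stepA : exists a b, a != b /\ connect r0 (fV a) (fV b).
  case: (boolP [exists a, exists b, (a != b) && connect r0 (fV a) (fV b)]) =>
    [/existsP [a /existsP [b /andP [ab c]]]|NA]; first by exists a, b.
  exfalso.
  have NA' : forall a b, connect r0 (fV a) (fV b) -> a = b.
    move=> a b c; apply/eqP; apply: contraR NA => ab; apply/existsP; exists a;
    by apply/existsP; exists b; rewrite ab c.
  pose L v a := connect r0 (fV a) v || connect r0 v (fV a).
  have Luniq : forall v a b, L v a -> L v b -> a = b.
    move=> v a b /orP [ha|ha] /orP [hb|hb].
    - have [c hc] := Out v.
      by rewrite (NA' _ _ (connect_trans ha hc)) (NA' _ _ (connect_trans hb hc)).
    - exact: NA' (connect_trans ha hb).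
    - symmetry; exact: NA' (connect_trans hb ha).
    - have [c hc] := In v.
      by rewrite -(NA' _ _ (connect_trans hc ha)) -(NA' _ _ (connect_trans hc hb)).
  have Ledge : forall t h, r0 t h -> exists a, L t a /\ L h a.
    move=> t h th; have [b hb] := Out h; exists b; rewrite /L hb orbT; split => //.
    by rewrite (connect_trans (connect1 th) hb) orbT.
  have Ladj : forall u v, adj src' tgt' rest u v -> exists a, L u a /\ L v a.
    move=> u v /existsP [e /andP [eD je]].
    have th : r0 (tail src' tgt' o' e) (Defs.head src' tgt' o' e).
      by apply/existsP; exists e; rewrite eD !eqxx.
    have [a [ha1 ha2]] := Ledge _ _ th.
    exists a; move: je ha1 ha2; rewrite /joins /tail /Defs.head.
    by case: (o' e) => /orP [] /andP [/eqP -> /eqP ->] h1 h2; split.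
  have final : L (fV y0) x0.
    apply: (connect_fwd (P := fun w => L w x0) nice); first by rewrite /L connect0.
    move=> u v uv Lu; have [a [h1 h2]] := Ladj u v uv.
    by rewrite (Luniq _ _ _ Lu h1).
  by case/orP: final => /NA' e; move: xy0; rewrite e eqxx.
have [a [b [ab cab]]] := stepA.
have ba : b != a by rewrite eq_sym.
have [P [[vs [es [vinj vsurj [vs0 vsn] eok defP]]] sz]] := hyp b a ba.
set n := #|V| in vinj vsurj vsn eok defP.
have vinj' : forall i j, (i < n)%N -> (j < n)%N -> vs i = vs j -> i = j.
  by move=> i j iN jN h; apply: vinj; rewrite ?inE.
pose oP e0 := [exists i : 'I_n.-1, (es i == e0) && (src e0 == vs i)].
have keyP : forall i, (i.+1 < n)%N -> tail src tgt oP (es i) = vs i /\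
    Defs.head src tgt oP (es i) = vs i.+1.
  move=> i iN; rewrite /tail /Defs.head.
  have [_ /orP [/andP [/eqP s /eqP t]|/andP [/eqP s /eqP t]]] := eok i iN.
    have -> : oP (es i).
      have iN' : (i < n.-1)%N by rewrite ltn_predRL.
      by apply/existsP; exists (Ordinal iN'); rewrite eqxx s eqxx.
    by [].
  have -> : oP (es i) = false.
    rewrite /oP; case: existsP => // -[j /andP [/eqP ej /eqP sj]]; exfalso.
    have jN : (j.+1 < n)%N by rewrite -ltn_predRL.
    have ji : (j : nat) = i.+1.
      by apply: vinj' => //; [exact: ltnW | rewrite -sj s].
    have [_ /orP [/andP [/eqP s2 /eqP t2]|/andP [/eqP s2 /eqP t2]]] := eok j jN;
      rewrite ej s t ji in s2 t2.
      have i2 : (i.+2 < n)%N by rewrite -ji.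
      by have := vinj' _ _ (ltnW iN) i2 t2; lia.
    have i2 : (i.+2 < n)%N by rewrite -ji.
    by have := vinj' _ _ iN i2 s2; lia.
  by [].
have indc : forall w, \sum_a ((w == fV a) : nat)%:Z = ((w \in codom fV) : nat)%:Z.
  move=> w; case: (boolP (w \in codom fV)) => [/codomP [a0 ->]|nw].
    rewrite (bigD1 a0) //= eqxx big1 ?addr0 // => a0' /negbTE.
    by rewrite (inj_eq fVinj) eq_sym => ->.
  apply: big1 => a0 _; case: eqP => // wa; case/negP: nw; rewrite wa; exact: codom_f.
have both : forall e, e \in D' -> e \notin CE ->
    (src' e \in codom fV) && (tgt' e \in codom fV).
  move=> e eD; rewrite inE eD /= negbK /csrc /ctgt.
  case hs: (cmap fV (src' e)) => [y|]; case ht: (cmap fV (tgt' e)) => [z|] //.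
  - move=> /eqP h; have yz := Some_inj h; have := ll' e eD.
    by rewrite -(cmapS hs) -(cmapS ht) yz eqxx.
  - by rewrite -!cmapN hs ht.
have sumrest : \sum_a netout src' tgt' rest o' (fV a) =
    netout (csrc fV src') (ctgt fV tgt') CE o' None.
  under eq_bigr do rewrite netoutE.
  rewrite exchange_big /= netoutE (big_setID CE) /=.
  have -> : rest :&: CE = CE by apply/setIidPr/subsetP => e; exact: CErest.
  rewrite [X in _ + X]big1 ?addr0 => [|e]; last first.
    move=> /setDP [/setDP [eD _] eC].
    rewrite sumrB !indc; move: (both e eD eC); rewrite /tail /Defs.head.
    by case: (o' e) => /andP [-> ->]; rewrite subrr.
  apply: eq_bigr => e _; rewrite sumrB !indc tail_c head_c.
  by rewrite -!cmapN.
pose gam a := beta (fV a) - netout src' tgt' rest o' (fV a) - netout src tgt P oP a.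
have [|oS hoS] := sz gam.
  have -> : \sum_a gam a = \sum_a beta (fV a) - \sum_a netout src' tgt' rest o' (fV a)
     - \sum_a netout src tgt P oP a by rewrite -!sumrB.
  rewrite netout_sum subr0 sumrest.
  have := hbeta None; rewrite /= !eqz_mod_dvd subr0 => h.
  rewrite -opprB rpredN; apply: dvdz_trans h; by rewrite PoszM dvdz_mull.
pose oE e0 := if e0 \in P then oP e0 else oS e0.
pose o e := if [pick e0 | fE e0 == e] is Some e0 then
   (if src' e == fV (src e0) then oE e0 else ~~ oE e0) else o' e.
have transfer : forall e0, tail src' tgt' o (fE e0) = fV (tail src tgt oE e0) /\
    Defs.head src' tgt' o (fE e0) = fV (Defs.head src tgt oE e0).
  move=> e0.
  have pk : [pick e1 | fE e1 == fE e0] = Some e0.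
    case: pickP => [e1 /eqP h|/(_ e0)]; last by rewrite eqxx.
    by rewrite (fEinj _ _ (in_setT _) (in_setT _) h).
  rewrite /tail /Defs.head /o pk.
  have [_ j] := fEok e0 (in_setT _); have sne := ll e0 (in_setT _).
  case/orP: j => /andP [/eqP s /eqP t]; rewrite s t.
    by rewrite eqxx; case: (oE e0).
  rewrite (inj_eq fVinj) eq_sym (negbTE sne).
  by case: (oE e0).
have nonH : forall e, e \notin HS -> o e = o' e.
  move=> e eH; rewrite /o; case: pickP => // e0 /eqP h.
  by case/negP: eH; rewrite -h; apply: imset_f.
have restE : forall v, netout src' tgt' rest o v = netout src' tgt' rest o' v.
  move=> v; apply: eq_netout => e /setDP [_ eH]; exact: nonH.
have HSE : D' :&: HS = HS by apply/setIidPr/subsetP => e; exact: HSD.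
have netH : forall a0, netout src' tgt' D' o (fV a0) = netout src tgt P oP a0 +
    netout src tgt (~: P) oS a0 + netout src' tgt' rest o' (fV a0).
  move=> a0; rewrite (netout_split _ _ _ HS) HSE -/rest restE; congr (_ + _).
  have -> : netout src tgt P oP a0 + netout src tgt (~: P) oS a0 =
      netout src tgt [set: E] oE a0.
    rewrite [RHS](netout_split _ _ _ P) setTI setTD; congr (_ + _); apply: eq_netout => e.
      by rewrite /oE => ->.
    by rewrite /oE inE => /negbTE ->.
  rewrite !netoutE big_imset /=; last by move=> x y _ _; apply: fEinj; rewrite inE.
  apply: eq_bigr => e0 _; have [-> ->] := transfer e0.
  by rewrite !(inj_eq fVinj).
have netO : forall v (nv : v \notin codom fV), netout src' tgt' D' o v =
    netout (csrc fV src') (ctgt fV tgt') CE o' (Some (exist _ v nv)).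
  move=> v nv; rewrite (netout_split _ _ _ HS) HSE -/rest restE.
  have -> : netout src' tgt' HS o v = 0.
    rewrite netoutE big1 // => e eH; have := HSends e eH.
    have nv1 : forall w, w \in codom fV -> (w == v) = false.
      by move=> w wc; apply/negbTE; apply: contra nv => /eqP <-.
    rewrite /tail /Defs.head; case: (o e) => /andP [s t]; by rewrite !nv1.
  rewrite add0r (netout_split _ _ _ CE).
  have -> : rest :&: CE = CE by apply/setIidPr/subsetP => e; exact: CErest.
  have -> : netout src' tgt' (rest :\: CE) o' v = 0.
    rewrite netoutE big1 // => e /setDP [/setDP [eD _] eC]; have := both e eD eC.
    have nv1 : forall w, w \in codom fV -> (w == v) = false.
      by move=> w wc; apply/negbTE; apply: contra nv => /eqP <-.
    rewrite /tail /Defs.head; case: (o' e) => /andP [s t]; by rewrite !nv1.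
  rewrite addr0 !netoutE; apply: eq_bigr => e _.
  by rewrite tail_c head_c !cmap_eqS.
exists o; split; last first.
- by move=> e eC; apply: nonH; apply: CEnH.
- move=> v; case: (boolP (v \in codom fV)) => [/codomP [a0 ->]| nv].
    apply: combine_mod => //.
      rewrite netH; have := hoS a0; rewrite /gam !eqz_mod_dvd.
      set p := netout src tgt P oP a0; set q := netout src tgt (~: P) oS a0.
      set r := netout src' tgt' rest o' (fV a0).
      by have -> : p + q + r - beta (fV a0) = q - (beta (fV a0) - r - p) by ring.
    have [_ bpar _] := bpc.
    by rewrite (eqP (netout_parity o (fV a0) ll')) (eqP (bpar (fV a0))).
  by rewrite netO; apply: hbeta.
apply: sc_of_connect.
set r := darc src' tgt' D' o.
have Pin : forall i, (i.+1 < n)%N -> es i \in P.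
  move=> i iN; rewrite defP inE; apply/existsP.
  have iN' : (i < n.-1)%N by rewrite ltn_predRL.
  by exists (Ordinal iN').
have stepH : forall i, (i.+1 < n)%N -> r (fV (vs i)) (fV (vs i.+1)).
  move=> i iN; apply/existsP; exists (fE (es i)).
  have [-> _] := fEok (es i) (in_setT _).
  have [-> ->] := transfer (es i).
  have eo : oE (es i) = oP (es i) by rewrite /oE Pin.
  by rewrite (tail_eqo _ _ eo) (head_eqo _ _ eo); have [-> ->] := keyP i iN; rewrite !eqxx.
have walkH : forall i m, (i + m < n)%N -> connect r (fV (vs i)) (fV (vs (i + m)%N)).
  move=> i; elim => [|m IH] h; first by rewrite addn0 connect0.
  apply: connect_trans (IH (ltnW (leq_trans _ h)) ) _; first by rewrite addnS.
  by apply: connect1; rewrite addnS; apply: stepH; rewrite -addnS.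
have n0 : (0 < n)%N.
  by have [i iN _] := vsurj a; apply: leq_ltn_trans iN.
have cab' : connect r (fV a) (fV b).
  apply: connect_sub_arc cab.
    by apply/subsetP => e /setDP [].
  by move=> e /setDP [_ eH]; rewrite nonH.
have Hconn : forall c d, connect r (fV c) (fV d).
  move=> c d; have [i iN <-] := vsurj c; have [j jN <-] := vsurj d.
  have e1 : (i + (n.-1 - i) = n.-1)%N by rewrite subnKC // -ltnS prednK.
  have := walkH i (n.-1 - i)%N; rewrite e1 vsn prednK // => /(_ (leqnn _)) h1.
  apply: connect_trans h1 _; apply: connect_trans cab' _.
  have := walkH 0%N j; rewrite add0n vs0; exact.
have same : forall u v, cmap fV u = cmap fV v -> connect r u v.
  move=> u v; case hu: (cmap fV u) => [y|] hv.
    by rewrite -(cmapS hu) -(cmapS (esym hv)) connect0.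
  have [c ->] := codomN _ hu; have [d ->] := codomN _ (esym hv); exact: Hconn.
move=> u v.
apply: (connect_fwd (P := fun Y => forall w, cmap fV w = Y -> connect r u w)
  (cc (cmap fV u) (cmap fV v))) => //; first by move=> w /esym; exact: same.
move=> X Y /existsP [e /andP [eC /andP [/eqP t /eqP h]]] QX w wY.
rewrite tail_c in t; rewrite head_c in h.
apply: connect_trans (QX _ t) _.
apply: connect_trans (same (Defs.head src' tgt' o' e) w _); last by rewrite h wY.
apply: connect1; apply/existsP; exists e.
have eD : e \in D' by move: (CErest e eC) => /setDP [].
have eo : o e = o' e by apply: nonH; apply: CEnH.
by rewrite eD (tail_eqo _ _ eo) (head_eqo _ _ eo) !eqxx.
Qed.

Local Close Scope ring_scope.
Unset Implicit Arguments.
Set Strict Implicit.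

Theorem proposition2p12 (k : nat) (V E : finType) (src tgt : E -> V) :
  (0 < k)%N -> loopless src tgt [set: E] ->
  ((exists C : {set E}, ham_cycle src tgt [set: E] C /\ SZ src tgt k (~: C)) ->
     SC src tgt k [set: E]) /\
  ((forall x y : V, x != y ->
      exists P : {set E}, ham_path src tgt [set: E] x y P /\ SZ src tgt k (~: P)) ->
     W k src tgt [set: E]).
Proof.
move=> k0 ll; split; [exact: part1 | exact: part2].
Qed.
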